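(* Let $0<q\le1\le p\le2$, let $A\in\mathbb{R}^{m\times n}$, let $\bar{x}\in\mathbb{R}^n$ have exactly $S\ge1$ nonzero groups, let $\mathcal{S}:=\{i:\bar{x}_{\mathcal{G}_i}\ne0\}$, and set $b:=A\bar{x}$. Suppose the $(p,q)$-GREC$(S,S)$ holds. Let $K$ be the smallest integer with $2^{K-1}q\ge1$. Then for every $x^*\in{\rm lev}_F(\bar{x}):=\{x:\|Ax-b\|_2^2+\lambda\|x\|_{p,q}^q\le\lambda\|\bar{x}\|_{p,q}^q\}$ (where $\lambda>0$), $$\|Ax^*-A\bar{x}\|_2^2+\lambda\|x^*_{\mathcal{G}_{\mathcal{S}^c}}\|_{p,q}^q\le\lambda^{\frac{2}{2-q}}S^{(1-2^{-K})\frac{2}{2-q}}\big/\phi_{p,q}^{\frac{2q}{2-q}}(S,S),$$ and, with $\mathcal{N}_*:=\mathcal{S}\cup\mathcal{S}(x^*;S)$, $$\|x^*_{\mathcal{G}_{\mathcal{N}_*}}-\bar{x}_{\mathcal{G}_{\mathcal{N}_*}}\|_{p,2}^2\le\lambda^{\frac{2}{2-q}}S^{(1-2^{-K})\frac{2}{2-q}}\big/\phi_{p,q}^{\frac{4}{2-q}}(S,S).$$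
   Context: Group structure: $\{1,\dots,n\}$ is partitioned into disjoint nonempty index sets $\mathcal{G}_1,\dots,\mathcal{G}_r$; $x_{\mathcal{G}_i}$ is the subvector indexed by $\mathcal{G}_i$. For $\mathcal{J}\subseteq\{1,\dots,r\}$, $\|x_{\mathcal{G}_{\mathcal{J}}}\|_{p,q}:=(\sum_{i\in\mathcal{J}}\|x_{\mathcal{G}_i}\|_p^q)^{1/q}$ and $\|x\|_{p,q}:=\|x_{\mathcal{G}_{\{1,\dots,r\}}}\|_{p,q}$; $x_{\mathcal{G}_{\mathcal{J}}}$ denotes the subvector indexed by $\bigcup_{i\in\mathcal{J}}\mathcal{G}_i$. For $\mathcal{J}\subseteq\{1,\dots,r\}$ and integer $N$, $\mathcal{J}(x;N)$ is the set of the $N$ indices $i\in\mathcal{J}^c$ with the largest $\|x_{\mathcal{G}_i}\|_p$ (ties broken arbitrarily; all of $\mathcal{J}^c$ if it has fewer than $N$ elements). Group restricted eigenvalue: $\phi_{p,q}(S,N):=\inf\{\|Ax\|_2/\|x_{\mathcal{G}_{\mathcal{N}}}\|_{p,2}: x\ne0,\ |\mathcal{J}|\le S,\ \|x_{\mathcal{G}_{\mathcal{J}^c}}\|_{p,q}\le\|x_{\mathcal{G}_{\mathcal{J}}}\|_{p,q},\ \mathcal{N}=\mathcal{J}(x;N)\cup\mathcal{J}\}$; the $(p,q)$-GREC$(S,N)$ holds if $\phi_{p,q}(S,N)>0$. *)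

(* Defs.v *)
From Stdlib Require Import Reals Lra Lia ZArith.
Open Scope R_scope.

Fixpoint rsum (n : nat) (f : nat -> R) : R :=
  match n with O => 0 | S k => rsum k f + f k end.

Fixpoint ncount (n : nat) (P : nat -> bool) : nat :=
  match n with O => O | S k => (ncount k P + (if P k then 1 else 0))%nat end.

(* Real power with base >= 0 convention 0^y = 0 (used only for y > 0). *)
Definition rpow (x y : R) : R := if Rlt_dec 0 x then Rpower x y else 0.

Definition norm2 (m : nat) (v : nat -> R) : R := sqrt (rsum m (fun i => v i ^ 2)).

Definition matvec (n : nat) (A : nat -> nat -> R) (x : nat -> R) : nat -> R :=
  fun i => rsum n (fun j => A i j * x j).

(* Group structure: index j < n belongs to group G_(g j), g j < r. *)
Definition group_partition (n r : nat) (g : nat -> nat) : Prop :=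
  (forall j, (j < n)%nat -> (g j < r)%nat) /\
  (forall i, (i < r)%nat -> exists j, (j < n)%nat /\ g j = i).

Definition gnorm (n : nat) (g : nat -> nat) (p : R) (x : nat -> R) (i : nat) : R :=
  rpow (rsum n (fun j => if Nat.eqb (g j) i then rpow (Rabs (x j)) p else 0)) (1 / p).

Definition pqnorm (n r : nat) (g : nat -> nat) (p q : R) (J : nat -> bool) (x : nat -> R) : R :=
  rpow (rsum r (fun i => if J i then rpow (gnorm n g p x i) q else 0)) (1 / q).

Definition nzb (a : R) : bool := if Req_EM_T a 0 then false else true.

Definition group_nz (n : nat) (g : nat -> nat) (x : nat -> R) (i : nat) : bool :=
  List.existsb (fun j => andb (Nat.eqb (g j) i) (nzb (x j))) (List.seq 0 n).

(* T is a valid choice of J(x;N): the N indices of J^c (within {0..r-1}) with the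
   largest ||x_{G_i}||_p, ties broken arbitrarily; all of J^c if |J^c| < N. *)
Definition is_top_set (n r : nat) (g : nat -> nat) (p : R) (x : nat -> R)
    (J : nat -> bool) (N : nat) (T : nat -> bool) : Prop :=
  (forall i, T i = true -> (i < r)%nat /\ J i = false) /\
  ncount r T = Nat.min N (ncount r (fun i => negb (J i))) /\
  (forall i k, (i < r)%nat -> (k < r)%nat -> T i = true -> J k = false -> T k = false ->
     gnorm n g p x k <= gnorm n g p x i).

(* The set of ratios whose infimum is phi_{p,q}(S,N). *)
Definition grec_ratio (m n r : nat) (g : nat -> nat) (A : nat -> nat -> R) (p q : R)
    (S N : nat) (y : R) : Prop :=
  exists (x : nat -> R) (J T : nat -> bool),
    (exists j, (j < n)%nat /\ x j <> 0) /\
    (forall i, J i = true -> (i < r)%nat) /\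
    (ncount r J <= S)%nat /\
    pqnorm n r g p q (fun i => negb (J i)) x <= pqnorm n r g p q J x /\
    is_top_set n r g p x J N T /\
    y = norm2 m (matvec n A x) / pqnorm n r g p 2 (fun i => orb (T i) (J i)) x.

Definition is_inf (E : R -> Prop) (a : R) : Prop :=
  (forall y, E y -> a <= y) /\ (forall b, (forall y, E y -> b <= y) -> b <= a).

Definition is_phi (m n r : nat) (g : nat -> nat) (A : nat -> nat -> R) (p q : R)
    (S N : nat) (phi : R) : Prop :=
  is_inf (grec_ratio m n r g A p q S N) phi.

(* Main.v *)
Require Import Defs.
From Stdlib Require Import Reals Lra Lia ZArith List Classical FunctionalExtensionality.
Open Scope R_scope.

Lemma exp_le x y : x <= y -> exp x <= exp y.
Proof. intros [H|H]. left; now apply exp_increasing. subst; lra. Qed.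

Lemma exp_le_inv x y : exp x <= exp y -> x <= y.
Proof. intros H. destruct (Rle_or_lt x y) as [h|h]; auto.
  apply exp_increasing in h; lra. Qed.

Lemma ln_ge0 x : 1 <= x -> 0 <= ln x.
Proof. intros H. apply exp_le_inv. rewrite exp_0, exp_ln; lra. Qed.

Lemma exp_convex t a b : 0 <= t <= 1 ->
  exp (t * a + (1 - t) * b) <= t * exp a + (1 - t) * exp b.
Proof.
  intros Ht. set (c := t * a + (1 - t) * b).
  assert (Ea : exp a = exp c * exp (a - c)) by (rewrite <- exp_plus; f_equal; ring).
  assert (Eb : exp b = exp c * exp (b - c)) by (rewrite <- exp_plus; f_equal; ring).
  pose proof (exp_ineq1_le (a - c)). pose proof (exp_ineq1_le (b - c)).
  pose proof (exp_pos c).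
  assert (exp c * (1 + (a - c)) <= exp a) by (rewrite Ea; apply Rmult_le_compat_l; lra).
  assert (exp c * (1 + (b - c)) <= exp b) by (rewrite Eb; apply Rmult_le_compat_l; lra).
  assert (t * (exp c * (1 + (a - c))) <= t * exp a) by (apply Rmult_le_compat_l; lra).
  assert ((1-t) * (exp c * (1 + (b - c))) <= (1-t) * exp b) by (apply Rmult_le_compat_l; lra).
  assert (t * (exp c * (1 + (a - c))) + (1-t) * (exp c * (1 + (b - c))) = exp c)
    by (unfold c; ring).
  lra.
Qed.

Lemma rpow_pos_eq x y : 0 < x -> rpow x y = exp (y * ln x).
Proof. intros H; unfold rpow, Rpower; destruct (Rlt_dec 0 x); [reflexivity|lra]. Qed.

Lemma rpow_0b y : rpow 0 y = 0.
Proof. unfold rpow; destruct (Rlt_dec 0 0); [lra|reflexivity]. Qed.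

Lemma rpow_ge0 x y : 0 <= rpow x y.
Proof. unfold rpow; destruct (Rlt_dec 0 x). unfold Rpower; left; apply exp_pos. lra. Qed.

Lemma rpow_gt0 x y : 0 < x -> 0 < rpow x y.
Proof. intros H; rewrite rpow_pos_eq by auto; apply exp_pos. Qed.

Lemma rpow_mult x a b : 0 <= x -> rpow (rpow x a) b = rpow x (a * b).
Proof.
  intros [H|H].
  - rewrite (rpow_pos_eq x a), (rpow_pos_eq x (a*b)), rpow_pos_eq by (auto; apply exp_pos).
    rewrite ln_exp; f_equal; ring.
  - subst; rewrite !rpow_0b; reflexivity.
Qed.

Lemma rpow_1 x : 0 <= x -> rpow x 1 = x.
Proof. intros [H|H]. rewrite rpow_pos_eq by auto; rewrite Rmult_1_l, exp_ln; auto.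
  subst; apply rpow_0b. Qed.

Lemma rpow_mul x y a : 0 <= x -> 0 <= y -> rpow (x * y) a = rpow x a * rpow y a.
Proof.
  intros [Hx|Hx] [Hy|Hy].
  - rewrite !rpow_pos_eq by (auto; nra). rewrite ln_mult by auto. rewrite <- exp_plus; f_equal; ring.
  - subst; rewrite Rmult_0_r, !rpow_0b; ring.
  - subst; rewrite Rmult_0_l, !rpow_0b; ring.
  - subst; rewrite Rmult_0_l, !rpow_0b; ring.
Qed.

Lemma rpow_inv y a : 0 < y -> rpow (/ y) a = / rpow y a.
Proof. intros H. rewrite !rpow_pos_eq by (auto; apply Rinv_0_lt_compat; auto).
  rewrite ln_Rinv by auto. rewrite <- exp_Ropp; f_equal; ring. Qed.

Lemma rpow_div x y a : 0 <= x -> 0 < y -> rpow (x / y) a = rpow x a / rpow y a.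
Proof. intros Hx Hy. unfold Rdiv. rewrite rpow_mul, rpow_inv; auto.
  left; apply Rinv_0_lt_compat; auto. Qed.

Lemma rpow_le x y a : 0 <= a -> 0 <= x <= y -> rpow x a <= rpow y a.
Proof.
  intros Ha [[Hx|Hx] Hxy].
  - rewrite !rpow_pos_eq by lra. apply exp_le. apply Rmult_le_compat_l; auto.
    destruct Hxy as [h|h]; [left; apply ln_increasing; auto | subst; lra].
  - subst; rewrite rpow_0b; apply rpow_ge0.
Qed.

Lemma rpow_inv_pow x y : 0 <= x -> 0 < y -> rpow (rpow x (1 / y)) y = x.
Proof. intros Hx Hy. rewrite rpow_mult by auto. replace (1 / y * y) with 1 by (field; lra).
  apply rpow_1; auto. Qed.

Lemma rpow_pow_inv x y : 0 <= x -> 0 < y -> rpow (rpow x y) (1 / y) = x.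
Proof. intros Hx Hy. rewrite rpow_mult by auto. replace (y * (1 / y)) with 1 by (field; lra).
  apply rpow_1; auto. Qed.

Lemma rpow_eq0 x a : 0 <= x -> rpow x a = 0 -> x = 0.
Proof. intros [H|H] E; auto. pose proof (rpow_gt0 x a H); lra. Qed.

Lemma rpow_2 x : 0 <= x -> rpow x 2 = x ^ 2.
Proof. intros [H|H].
  - unfold rpow; destruct (Rlt_dec 0 x); [|lra]. replace 2 with (INR 2) by (simpl; lra).
    now rewrite Rpower_pow.
  - subst; rewrite rpow_0b; simpl; ring. Qed.

Lemma bern1 z p : 0 <= z -> 1 <= p -> 1 + p * (z - 1) <= rpow z p.
Proof.
  intros [Hz|Hz] Hp.
  - rewrite rpow_pos_eq by auto.
    pose proof (exp_convex (1/p) (p * ln z) 0) as H.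
    assert (0 <= 1/p <= 1) by (split; [apply Rlt_le; apply Rdiv_lt_0_compat; lra|
      apply (Rmult_le_reg_l p); [lra|]; field_simplify; lra]).
    specialize (H H0).
    replace (1 / p * (p * ln z) + (1 - 1 / p) * 0) with (ln z) in H by (field; lra).
    rewrite exp_ln, exp_0 in H by auto.
    assert (p * z <= p * (1 / p * exp (p * ln z) + (1 - 1 / p) * 1)) by (apply Rmult_le_compat_l; lra).
    replace (p * (1 / p * exp (p * ln z) + (1 - 1 / p) * 1)) with (exp (p * ln z) + p - 1) in H1 by (field; lra).
    lra.
  - subst; rewrite rpow_0b; lra.
Qed.

Lemma bern2 x t : 0 <= x -> 0 < t <= 1 -> rpow x t <= 1 + t * (x - 1).
Proof.
  intros [Hx|Hx] Ht.
  - rewrite rpow_pos_eq by auto.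
    pose proof (exp_convex t (ln x) 0) as H.
    replace (t * ln x + (1 - t) * 0) with (t * ln x) in H by ring.
    rewrite exp_ln, exp_0 in H by auto. specialize (H ltac:(lra)). lra.
  - subst; rewrite rpow_0b; lra.
Qed.

Lemma rpow_ge_self x q : 0 <= x <= 1 -> 0 < q <= 1 -> x <= rpow x q.
Proof.
  intros [[Hx|Hx] H1] Hq.
  - rewrite rpow_pos_eq by auto. rewrite <- (exp_ln x) at 1 by auto. apply exp_le.
    assert (ln x <= 0). { destruct H1 as [h|h]. left; rewrite <- ln_1; apply ln_increasing; auto. subst; rewrite ln_1; lra. }
    nra.
  - subst; rewrite rpow_0b; lra.
Qed.

Lemma rpow_subadd a b q : 0 <= a -> 0 <= b -> 0 < q <= 1 ->
  rpow (a + b) q <= rpow a q + rpow b q.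
Proof.
  intros Ha Hb Hq.
  destruct (Req_dec (a + b) 0) as [E|E].
  - rewrite E, rpow_0b. pose proof (rpow_ge0 a q); pose proof (rpow_ge0 b q); lra.
  - assert (M : 0 < a + b) by lra.
    pose proof (rpow_ge_self (a / (a+b)) q) as H1.
    pose proof (rpow_ge_self (b / (a+b)) q) as H2.
    rewrite rpow_div in H1, H2 by auto.
    assert (0 <= a / (a+b) <= 1) by (split; [apply Rle_mult_inv_pos; auto|
      apply (Rmult_le_reg_l (a+b)); auto; field_simplify; lra]).
    assert (0 <= b / (a+b) <= 1) by (split; [apply Rle_mult_inv_pos; auto|
      apply (Rmult_le_reg_l (a+b)); auto; field_simplify; lra]).
    specialize (H1 H Hq). specialize (H2 H0 Hq).
    pose proof (rpow_gt0 (a+b) q M) as P.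
    assert (1 <= (rpow a q + rpow b q) / rpow (a+b) q).
    { replace 1 with (a/(a+b) + b/(a+b)) by (field; lra).
      replace ((rpow a q + rpow b q) / rpow (a+b) q) with (rpow a q / rpow (a+b) q + rpow b q / rpow (a+b) q) by (field; lra).
      lra. }
    apply (Rmult_le_compat_l (rpow (a+b) q)) in H3; [|lra].
    replace (rpow (a + b) q * ((rpow a q + rpow b q) / rpow (a + b) q)) with (rpow a q + rpow b q) in H3 by (field; lra).
    lra.
Qed.

Lemma rpow_convex u v L p : 0 <= u -> 0 <= v -> 0 <= L <= 1 -> 1 <= p ->
  rpow (L * u + (1 - L) * v) p <= L * rpow u p + (1 - L) * rpow v p.
Proof.
  intros Hu Hv HL Hp. set (w := L * u + (1 - L) * v).
  assert (Hw : 0 <= w) by (unfold w; nra).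
  pose proof (rpow_ge0 u p); pose proof (rpow_ge0 v p).
  destruct Hw as [Hw|Hw].
  - pose proof (bern1 (u / w) p) as B1. pose proof (bern1 (v / w) p) as B2.
    rewrite rpow_div in B1, B2 by auto.
    assert (0 <= u / w) by (apply Rle_mult_inv_pos; auto).
    assert (0 <= v / w) by (apply Rle_mult_inv_pos; auto).
    specialize (B1 H1 Hp). specialize (B2 H2 Hp).
    set (W := rpow w p) in *. assert (0 < W) by (apply rpow_gt0; auto).
    assert (U : W * (1 + p * (u / w - 1)) <= rpow u p).
    { apply (Rmult_le_compat_l W) in B1; [|lra]. replace (W * (rpow u p / W)) with (rpow u p) in B1 by (field; lra). lra. }
    assert (V : W * (1 + p * (v / w - 1)) <= rpow v p).
    { apply (Rmult_le_compat_l W) in B2; [|lra]. replace (W * (rpow v p / W)) with (rpow v p) in B2 by (field; lra). lra. }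
    assert (E : L * (W * (1 + p * (u / w - 1))) + (1 - L) * (W * (1 + p * (v / w - 1))) = W).
    { assert (Hwd : w = L*u+(1-L)*v) by reflexivity. clearbody w.
      transitivity (W + p*W*((L*u+(1-L)*v)/w - 1)); [field; lra|].
      rewrite <- Hwd. replace (w/w) with 1 by (field; lra). ring. }
    assert (L * (W * (1 + p * (u / w - 1))) <= L * rpow u p) by (apply Rmult_le_compat_l; lra).
    assert ((1-L) * (W * (1 + p * (v / w - 1))) <= (1-L) * rpow v p) by (apply Rmult_le_compat_l; lra).
    lra.
  - rewrite <- Hw, rpow_0b. nra.
Qed.

Lemma rsum_ext n f h : (forall i, (i < n)%nat -> f i = h i) -> rsum n f = rsum n h.
Proof. induction n; intros H; simpl; auto. rewrite IHn, H; auto. Qed.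

Lemma rsum_le n f h : (forall i, (i < n)%nat -> f i <= h i) -> rsum n f <= rsum n h.
Proof. induction n; intros H; simpl; [lra|]. pose proof (H n ltac:(lia)).
  assert (rsum n f <= rsum n h) by (apply IHn; auto). lra. Qed.

Lemma rsum_plus n f h : rsum n (fun i => f i + h i) = rsum n f + rsum n h.
Proof. induction n; simpl; [ring|]. rewrite IHn; ring. Qed.

Lemma rsum_minus n f h : rsum n (fun i => f i - h i) = rsum n f - rsum n h.
Proof. induction n; simpl; [ring|]. rewrite IHn; ring. Qed.

Lemma rsum_scal n c f : rsum n (fun i => c * f i) = c * rsum n f.
Proof. induction n; simpl; [ring|]. rewrite IHn; ring. Qed.

Lemma rsum_zero n f : (forall i, (i < n)%nat -> f i = 0) -> rsum n f = 0.
Proof. intros H. rewrite (rsum_ext n f (fun _ => 0)) by auto. clear; induction n; simpl; lra. Qed.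

Lemma rsum_nonneg n f : (forall i, (i < n)%nat -> 0 <= f i) -> 0 <= rsum n f.
Proof. intros H. apply Rle_trans with (rsum n (fun _ => 0)).
  right; symmetry; apply rsum_zero; auto. apply rsum_le; auto. Qed.

Lemma rsum_eq0 n f : (forall i, (i < n)%nat -> 0 <= f i) -> rsum n f = 0 ->
  forall i, (i < n)%nat -> f i = 0.
Proof. induction n; intros H E i Hi; [lia|]. simpl in E.
  assert (0 <= rsum n f) by (apply rsum_nonneg; auto).
  pose proof (H n ltac:(lia)).
  destruct (Nat.eq_dec i n). subst; lra.
  apply IHn; auto; lra || lia. Qed.

Lemma rsum_count r (J : nat -> bool) :
  rsum r (fun i => if J i then 1 else 0) = INR (ncount r J).
Proof. induction r; simpl; auto. rewrite IHr. rewrite plus_INR. destruct (J r); simpl; ring. Qed.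

Lemma holder r (J : nat -> bool) f t : (1 <= ncount r J)%nat ->
  (forall i, (i < r)%nat -> 0 <= f i) -> 0 < t <= 1 ->
  rsum r (fun i => if J i then rpow (f i) t else 0) <=
  rpow (INR (ncount r J)) (1 - t) * rpow (rsum r (fun i => if J i then f i else 0)) t.
Proof.
  intros HN Hf Ht. set (N := INR (ncount r J)).
  assert (HNp : 1 <= N) by (unfold N; apply (le_INR 1); auto).
  set (Z := rsum r (fun i => if J i then f i else 0)).
  assert (Hnn : forall i, (i < r)%nat -> 0 <= (if J i then f i else 0))
    by (intros i Hi; destruct (J i); auto; lra).
  assert (HZ : 0 <= Z) by (apply rsum_nonneg; auto).
  destruct HZ as [HZ|HZ].
  - assert (K : forall i, (i < r)%nat ->
      rpow (N / Z) t * (if J i then rpow (f i) t else 0) <=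
      (if J i then 1 else 0) + t * (N / Z * (if J i then f i else 0) - (if J i then 1 else 0))).
    { intros i Hi. destruct (J i).
      - rewrite <- rpow_mul by (auto; apply Rle_mult_inv_pos; lra).
        pose proof (bern2 (N / Z * f i) t).
        apply H; auto. apply Rmult_le_pos; auto. apply Rle_mult_inv_pos; lra.
      - lra. }
    apply rsum_le in K. rewrite rsum_scal, rsum_plus, rsum_scal, rsum_minus, rsum_scal, rsum_count in K.
    fold Z N in K. replace (N + t * (N / Z * Z - N)) with N in K by (field; lra).
    pose proof (rpow_gt0 (N / Z) t ltac:(apply Rdiv_lt_0_compat; lra)).
    rewrite rpow_div in H by lra.
    rewrite rpow_div in K by lra.
    set (S := rsum r (fun i => if J i then rpow (f i) t else 0)) in *.
    assert (rpow N t > 0) by (apply rpow_gt0; lra).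
    assert (rpow Z t > 0) by (apply rpow_gt0; lra).
    assert (S <= N * rpow Z t / rpow N t).
    { apply (Rmult_le_reg_l (rpow N t / rpow Z t)); auto.
      replace (rpow N t / rpow Z t * (N * rpow Z t / rpow N t)) with N by (field; lra). lra. }
    assert (N / rpow N t = rpow N (1 - t)).
    { rewrite !rpow_pos_eq by lra. rewrite <- (exp_ln N) at 1 by lra.
      unfold Rdiv; rewrite <- exp_Ropp, <- exp_plus. f_equal; ring. }
    rewrite <- H3. replace (N / rpow N t * rpow Z t) with (N * rpow Z t / rpow N t) by (field; lra). auto.
  - rewrite <- HZ, rpow_0b, Rmult_0_r. right. apply rsum_zero. intros i Hi.
    pose proof (rsum_eq0 _ _ Hnn (eq_sym HZ) i Hi) as H. simpl in H. destruct (J i); auto. rewrite H, rpow_0b; auto.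

Qed.

Definition Psum n (P : nat -> bool) p (a : nat -> R) :=
  rsum n (fun j => if P j then rpow (Rabs (a j)) p else 0).
Definition Np n P p a := rpow (Psum n P p a) (1 / p).

Lemma Psum_ge0 n P p a : 0 <= Psum n P p a.
Proof. apply rsum_nonneg; intros; destruct (P i); [apply rpow_ge0|lra]. Qed.

Lemma Np_ge0 n P p a : 0 <= Np n P p a.
Proof. apply rpow_ge0. Qed.

Lemma Np_pow n P p a : 0 < p -> rpow (Np n P p a) p = Psum n P p a.
Proof. intros; unfold Np; apply rpow_inv_pow; auto; apply Psum_ge0. Qed.

Lemma Np_mono n P p a b : 0 < p ->
  (forall j, (j < n)%nat -> P j = true -> Rabs (a j) <= Rabs (b j)) -> Np n P p a <= Np n P p b.
Proof. intros Hp H. unfold Np. apply rpow_le. left; apply Rdiv_lt_0_compat; lra.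
  split; [apply Psum_ge0|]. apply rsum_le. intros j Hj. destruct (P j) eqn:E; [|lra].
  apply rpow_le; [lra|]. split; [apply Rabs_pos| auto]. Qed.

Lemma mink_zero n P p a b c : 1 <= p ->
  (forall j, (j < n)%nat -> P j = true -> Rabs (c j) <= Rabs (a j) + Rabs (b j)) ->
  Np n P p a = 0 -> Np n P p c <= Np n P p a + Np n P p b.
Proof.
  intros Hp H E. rewrite E, Rplus_0_l. apply Np_mono; [lra|].
  assert (Psum n P p a = 0) by (rewrite <- Np_pow, E, rpow_0b by lra; auto).
  assert (Hnn : forall i, (i < n)%nat -> 0 <= (if P i then rpow (Rabs (a i)) p else 0))
    by (intros i _; destruct (P i); [apply rpow_ge0|lra]).
  intros j Hj Pj. pose proof (rsum_eq0 _ _ Hnn H0 j Hj) as Z.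
  simpl in Z. rewrite Pj in Z. apply rpow_eq0 in Z; [|apply Rabs_pos].
  specialize (H j Hj Pj). lra.
Qed.

Lemma minkowski n P p a b c : 1 <= p ->
  (forall j, (j < n)%nat -> P j = true -> Rabs (c j) <= Rabs (a j) + Rabs (b j)) ->
  Np n P p c <= Np n P p a + Np n P p b.
Proof.
  intros Hp H.
  destruct (Np_ge0 n P p a) as [HA|HA]; [|apply mink_zero; auto].
  destruct (Np_ge0 n P p b) as [HB|HB];
    [|rewrite Rplus_comm; apply mink_zero; auto; intros; rewrite Rplus_comm; auto].
  set (A := Np n P p a) in *. set (B := Np n P p b) in *. set (M := A + B).
  set (L := A / M).
  assert (HM : 0 < M) by (unfold M; lra).
  assert (HL : 0 <= L <= 1) by (unfold L; split; [apply Rle_mult_inv_pos; lra|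
     apply (Rmult_le_reg_l M); auto; unfold M; field_simplify; lra]).
  assert (SA : rpow A p = Psum n P p a) by (apply Np_pow; lra).
  assert (SB : rpow B p = Psum n P p b) by (apply Np_pow; lra).
  assert (PA : 0 < rpow A p) by (apply rpow_gt0; auto).
  assert (PB : 0 < rpow B p) by (apply rpow_gt0; auto).
  assert (PM : 0 < rpow M p) by (apply rpow_gt0; auto).
  assert (K : forall j, (j < n)%nat ->
    / rpow M p * (if P j then rpow (Rabs (c j)) p else 0) <=
    L / rpow A p * (if P j then rpow (Rabs (a j)) p else 0) +
    (1 - L) / rpow B p * (if P j then rpow (Rabs (b j)) p else 0)).
  { intros j Hj. destruct (P j) eqn:Pj; [|lra].
    specialize (H j Hj Pj).
    pose proof (Rabs_pos (a j)); pose proof (Rabs_pos (b j)); pose proof (Rabs_pos (c j)).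
    assert (Hc : Rabs (c j) / M <= L * (Rabs (a j) / A) + (1 - L) * (Rabs (b j) / B)).
    { replace (L * (Rabs (a j) / A) + (1 - L) * (Rabs (b j) / B)) with ((Rabs (a j) + Rabs (b j)) / M)
        by (unfold L, M; field; lra).
      unfold Rdiv; apply Rmult_le_compat_r; auto. left; apply Rinv_0_lt_compat; auto. }
    assert (Hc0 : 0 <= Rabs (c j) / M) by (apply Rle_mult_inv_pos; lra).
    pose proof (rpow_le _ _ p ltac:(lra) (conj Hc0 Hc)) as Hc1. clear Hc; rename Hc1 into Hc.
    pose proof (rpow_convex (Rabs (a j) / A) (Rabs (b j) / B) L p) as Cv.
    rewrite !rpow_div in Hc, Cv by lra.
    rewrite (rpow_div (Rabs (b j)) B) in Cv by lra.
    assert (rpow (Rabs (c j)) p / rpow M p <= L * (rpow (Rabs (a j)) p / rpow A p) + (1 - L) * (rpow (Rabs (b j)) p / rpow B p)).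
    { eapply Rle_trans; [exact Hc|]. apply Cv; auto; apply Rle_mult_inv_pos; lra. }
    unfold Rdiv in H3 |- *. lra. }
  apply rsum_le in K. rewrite rsum_plus, !rsum_scal in K. fold (Psum n P p c) (Psum n P p a) (Psum n P p b) in K.
  rewrite <- SA, <- SB in K.
  replace (L / rpow A p * rpow A p + (1 - L) / rpow B p * rpow B p) with 1 in K by (field; lra).
  assert (Psum n P p c <= rpow M p).
  { apply (Rmult_le_reg_l (/ rpow M p)); [apply Rinv_0_lt_compat; auto|].
    rewrite Rinv_l; lra. }
  unfold Np. fold M. rewrite <- (rpow_pow_inv M p) by lra.
  apply rpow_le; [left; apply Rdiv_lt_0_compat; lra|]. split; auto; apply Psum_ge0.
Qed.
Open Scope bool_scope.

Lemma ncount_ext r P Q : (forall i, (i < r)%nat -> P i = Q i) -> ncount r P = ncount r Q.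
Proof. induction r; intros H; simpl; auto. rewrite IHr, H; auto. Qed.

Lemma ncount_mono r P Q : (forall i, (i < r)%nat -> P i = true -> Q i = true) ->
  (ncount r P <= ncount r Q)%nat.
Proof. induction r; intros H; simpl; auto.
  assert (ncount r P <= ncount r Q)%nat by (apply IHr; auto).
  destruct (P r) eqn:E. rewrite (H r); auto; lia. destruct (Q r); lia. Qed.

Lemma ncount_add1 r P k : (k < r)%nat -> P k = false ->
  ncount r (fun i => P i || Nat.eqb i k) = S (ncount r P).
Proof.
  induction r; intros Hk Pk; [lia|]. simpl.
  destruct (Nat.eq_dec k r).
  - subst. rewrite Pk, Nat.eqb_refl. simpl.
    rewrite (ncount_ext r (fun i => P i || Nat.eqb i r) P). lia.
    intros i Hi. destruct (Nat.eqb_spec i r); [lia|]. apply Bool.orb_false_r.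
  - rewrite IHr by (auto; lia). destruct (Nat.eqb_spec r k); [lia|]. rewrite Bool.orb_false_r. lia.
Qed.

Lemma argmax r (Q : nat -> bool) (h : nat -> R) :
  (exists k, (k < r)%nat /\ Q k = true) ->
  exists k0, (k0 < r)%nat /\ Q k0 = true /\ forall k, (k < r)%nat -> Q k = true -> h k <= h k0.
Proof.
  induction r; intros [k [Hk Qk]]; [lia|].
  destruct (classic (exists k, (k < r)%nat /\ Q k = true)) as [Ex|NEx].
  - destruct (IHr Ex) as [k0 [H0 [Q0 M0]]].
    destruct (Q r) eqn:Qr.
    + destruct (Rle_or_lt (h r) (h k0)).
      * exists k0; repeat split; auto. intros k' Hk' Qk'. destruct (Nat.eq_dec k' r); [subst; auto|apply M0; auto; lia].
      * exists r; repeat split; auto. intros k' Hk' Qk'. destruct (Nat.eq_dec k' r); [subst; lra|].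
        specialize (M0 k' ltac:(lia) Qk'); lra.
    + exists k0; repeat split; auto. intros k' Hk' Qk'. destruct (Nat.eq_dec k' r); [subst; congruence|apply M0; auto; lia].
  - assert (k = r) by (destruct (Nat.eq_dec k r); auto; exfalso; apply NEx; exists k; split; auto; lia).
    subst. exists r; repeat split; auto. intros k' Hk' Qk'. destruct (Nat.eq_dec k' r); [subst; lra|].
    exfalso; apply NEx; exists k'; split; auto; lia.
Qed.

Lemma top_exists n r g p x J N : exists T, is_top_set n r g p x J N T.
Proof.
  induction N.
  - exists (fun _ => false). repeat split; try discriminate. simpl.
    induction r; simpl; [auto|]. rewrite IHr; auto.
  - destruct IHN as [T [H1 [H2 H3]]].
    destruct (classic (exists k, (k < r)%nat /\ (negb (J k) && negb (T k)) = true)) as [Ex|NEx].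
    + destruct (argmax r _ (gnorm n g p x) Ex) as [k0 [Hk0 [Qk0 M0]]].
      apply andb_prop in Qk0; destruct Qk0 as [Jk0 Tk0]. apply Bool.negb_true_iff in Jk0, Tk0.
      exists (fun i => T i || Nat.eqb i k0). split; [|split].
      * intros i Hi. apply Bool.orb_prop in Hi. destruct Hi as [Hi|Hi]; auto.
        apply Nat.eqb_eq in Hi; subst; auto.
      * rewrite ncount_add1 by auto.
        assert (ncount r (fun i => T i || Nat.eqb i k0) <= ncount r (fun i => negb (J i)))%nat.
        { apply ncount_mono. intros i Hi Ti. apply Bool.orb_prop in Ti. destruct Ti as [Ti|Ti].
          destruct (H1 i Ti) as [_ ->]; auto. apply Nat.eqb_eq in Ti; subst; rewrite Jk0; auto. }
        rewrite ncount_add1 in H by auto. lia.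
      * intros i k Hi Hk Ti Jk Tk. apply Bool.orb_false_iff in Tk. destruct Tk as [Tk Ek].
        apply Bool.orb_prop in Ti. destruct Ti as [Ti|Ti]; [apply H3; auto|].
        apply Nat.eqb_eq in Ti; subst. apply M0; auto. rewrite Jk, Tk; auto.
    + exists T. split; [auto|split; auto].
      assert (ncount r T = ncount r (fun i => negb (J i))).
      { apply ncount_ext. intros i Hi. destruct (T i) eqn:Ti.
        destruct (H1 i Ti) as [_ ->]; auto.
        destruct (J i) eqn:Ji; auto. exfalso; apply NEx; exists i; rewrite Ji, Ti; auto. }
      lia.
Qed.

Lemma final_alg (lam phi sR q u a L1 D2 : R) :
  0 < lam -> 0 < phi -> 1 <= sR -> 0 < q <= 1 -> u <= q / 2 -> 0 <= a ->
  L1 <= lam * rpow sR (1 - q / 2) * rpow a q / rpow phi q ->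
  a ^ 2 <= L1 ->
  D2 <= a ^ 2 / phi ^ 2 ->
  L1 <= rpow lam (2 / (2 - q)) * rpow sR ((1 - u) * (2 / (2 - q))) / rpow phi (2 * q / (2 - q))
  /\ D2 <= rpow lam (2 / (2 - q)) * rpow sR ((1 - u) * (2 / (2 - q))) / rpow phi (4 / (2 - q)).
Proof.
  intros Hl Hp Hs Hq Hu Ha HL Ha2 HD.
  assert (R0 : forall e1 e2 e3, 0 <= rpow lam e1 * rpow sR e2 / rpow phi e3).
  { intros. apply Rle_mult_inv_pos. apply Rmult_le_pos; apply rpow_ge0. apply rpow_gt0; auto. }
  destruct Ha as [Ha|Ha].
  2:{ subst a. rewrite rpow_0b in HL.
      assert (L1 <= 0) by (eapply Rle_trans; [exact HL|]; right; unfold Rdiv; ring).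
      assert (D2 <= 0) by (eapply Rle_trans; [exact HD|]; right; simpl; unfold Rdiv; ring).
      split; eapply Rle_trans; eauto. }
  set (d := 2 - q). assert (Hd : 0 < d) by (unfold d; lra).
  set (ll := ln lam). set (ls := ln sR). set (lp := ln phi). set (la := ln a).
  assert (Hls : 0 <= ls) by (apply ln_ge0; auto).
  set (w := ll + (1 - q/2) * ls - q * lp).
  assert (Ec : lam * rpow sR (1 - q / 2) * rpow a q / rpow phi q = exp (w + q * la)).
  { rewrite !rpow_pos_eq by lra. unfold w, ll, la, ls, lp.
    rewrite <- (exp_ln lam) at 1 by auto. unfold Rdiv. rewrite <- exp_Ropp, <- !exp_plus. f_equal; ring. }
  assert (Ea2 : a ^ 2 = exp (2 * la)).
  { unfold la. replace (2 * ln a) with (ln a + ln a) by ring. rewrite exp_plus, exp_ln by auto. ring. }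
  assert (Hla : d * la <= w).
  { rewrite Ec, Ea2 in *. assert (exp (2 * la) <= exp (w + q * la)) by lra.
    apply exp_le_inv in H. unfold d; lra. }
  assert (Hla' : la <= w / d).
  { apply (Rmult_le_reg_l d); auto. replace (d * (w / d)) with w by (field; lra). lra. }
  assert (Ew : (2/d) * w = w + (q/d) * w) by (unfold d; field; lra).
  assert (Hq2 : q * la <= (q/d) * w).
  { replace ((q/d)*w) with (q * (w/d)) by (field; lra). apply Rmult_le_compat_l; lra. }
  assert (Hnn : 0 <= (2/d) * (q/2 - u) * ls).
  { apply Rmult_le_pos; auto. apply Rmult_le_pos; [left; apply Rdiv_lt_0_compat; lra|lra]. }
  split.
  - assert (E1 : rpow lam (2 / d) * rpow sR ((1 - u) * (2 / d)) / rpow phi (2 * q / d)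
            = exp ((2/d) * w + (2/d) * (q/2 - u) * ls)).
    { rewrite !rpow_pos_eq by lra. fold d ll ls lp. unfold Rdiv. rewrite <- exp_Ropp, <- !exp_plus.
      f_equal. unfold w. field. lra. }
    rewrite E1. eapply Rle_trans; [exact HL|]. rewrite Ec. apply exp_le. lra.
  - assert (E2 : rpow lam (2 / d) * rpow sR ((1 - u) * (2 / d)) / rpow phi (4 / d)
            = exp ((2/d) * w + (2/d) * (q/2 - u) * ls - 2 * lp)).
    { rewrite !rpow_pos_eq by lra. fold d ll ls lp. unfold Rdiv. rewrite <- exp_Ropp, <- !exp_plus.
      f_equal. unfold w, d. field. lra. }
    assert (E3 : a ^ 2 / phi ^ 2 = exp (2 * la - 2 * lp)).
    { rewrite Ea2. unfold Rminus. rewrite exp_plus. unfold lp.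
      replace (- (2 * ln phi)) with (- (ln phi + ln phi)) by ring. rewrite exp_Ropp, exp_plus, exp_ln by auto.
      simpl; field; lra. }
    rewrite E2. eapply Rle_trans; [exact HD|]. rewrite E3. apply exp_le.
    assert (2 * la <= (2/d) * w).
    { replace ((2/d)*w) with (2 * (w/d)) by (field; lra). lra. }
    lra.
Qed.

Lemma nz_false n g x i : group_nz n g x i = false -> forall j, (j < n)%nat -> g j = i -> x j = 0.
Proof.
  intros H j Hj Hg. unfold group_nz in H.
  destruct (List.existsb _ _) eqn:E in H; [discriminate|].
  destruct (nzb (x j)) eqn:Z.
  - assert (List.existsb (fun j0 => Nat.eqb (g j0) i && nzb (x j0)) (List.seq 0 n) = true).
    { apply List.existsb_exists. exists j. split. apply List.in_seq; lia.
      rewrite Hg, Nat.eqb_refl, Z; auto. }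
    congruence.
  - unfold nzb in Z. destruct (Req_EM_T (x j) 0); auto; discriminate.
Qed.

Lemma nz_true n r g x i : group_partition n r g -> group_nz n g x i = true -> (i < r)%nat.
Proof.
  intros [Hp _] H. apply List.existsb_exists in H. destruct H as [j [Hj Hb]].
  apply List.in_seq in Hj. apply andb_prop in Hb. destruct Hb as [Hb _].
  apply Nat.eqb_eq in Hb. subst. apply Hp; lia.
Qed.

Lemma gnorm_zero n g p x i : (forall j, (j < n)%nat -> g j = i -> x j = 0) -> gnorm n g p x i = 0.
Proof.
  intros H. unfold gnorm. rewrite rsum_zero. apply rpow_0b.
  intros j Hj. destruct (Nat.eqb_spec (g j) i); auto. rewrite H, Rabs_R0, rpow_0b; auto.
Qed.

Lemma gnorm_ext n g p x y i : (forall j, (j < n)%nat -> g j = i -> x j = y j) -> gnorm n g p x i = gnorm n g p y i.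
Proof.
  intros H. unfold gnorm. f_equal. apply rsum_ext. intros j Hj.
  destruct (Nat.eqb_spec (g j) i); auto. rewrite H; auto.
Qed.

Lemma gnorm_ge0 n g p x i : 0 <= gnorm n g p x i.
Proof. apply rpow_ge0. Qed.

Definition Pq n r g p q (J : nat -> bool) x :=
  rsum r (fun i => if J i then rpow (gnorm n g p x i) q else 0).

Lemma Pq_ge0 n r g p q J x : 0 <= Pq n r g p q J x.
Proof. apply rsum_nonneg; intros; destruct (J i); [apply rpow_ge0|lra]. Qed.

Lemma pq_pow n r g p q J x : 0 < q -> rpow (pqnorm n r g p q J x) q = Pq n r g p q J x.
Proof. intros; unfold pqnorm; apply rpow_inv_pow; auto; apply Pq_ge0. Qed.

Lemma pq2_sq n r g p J x : (pqnorm n r g p 2 J x) ^ 2 = Pq n r g p 2 J x.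
Proof. rewrite <- rpow_2 by apply rpow_ge0. apply pq_pow; lra. Qed.

Lemma pq_ext n r g p q J1 J2 x : (forall i, J1 i = J2 i) -> pqnorm n r g p q J1 x = pqnorm n r g p q J2 x.
Proof. intros H; unfold pqnorm; f_equal; apply rsum_ext; intros; rewrite H; auto. Qed.

Lemma core
  (m n r : nat) (g : nat -> nat) (A : nat -> nat -> R) (p q lambda : R)
  (xbar : nat -> R) (s : nat) (phi : R) (K : Z) :
  group_partition n r g ->
  0 < q -> q <= 1 -> 1 <= p -> p <= 2 ->
  (1 <= s)%nat ->
  ncount r (group_nz n g xbar) = s ->
  is_phi m n r g A p q s s phi -> 0 < phi ->
  powerRZ 2 (K - 1) * q >= 1 ->
  0 < lambda ->
  forall xs : nat -> R,
    (norm2 m (fun i => matvec n A xs i - matvec n A xbar i)) ^ 2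
      + lambda * rpow (pqnorm n r g p q (fun _ => true) xs) q
      <= lambda * rpow (pqnorm n r g p q (fun _ => true) xbar) q ->
  forall T, is_top_set n r g p (fun j => xs j - xbar j) (group_nz n g xbar) s T ->
    (norm2 m (fun i => matvec n A xs i - matvec n A xbar i)) ^ 2
      + lambda * rpow (pqnorm n r g p q (fun i => negb (group_nz n g xbar i)) xs) q
      <= rpow lambda (2 / (2 - q))
         * rpow (INR s) ((1 - powerRZ 2 (- K)) * (2 / (2 - q)))
         / rpow phi (2 * q / (2 - q))
    /\
       (pqnorm n r g p 2 (fun i => orb (group_nz n g xbar i) (T i))
          (fun j => xs j - xbar j)) ^ 2
       <= rpow lambda (2 / (2 - q))
          * rpow (INR s) ((1 - powerRZ 2 (- K)) * (2 / (2 - q)))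
          / rpow phi (4 / (2 - q)).
Proof.
  intros Hpart Hq0 Hq1 Hp1 Hp2 Hs1 Hns Hphi Hphi0 HK Hl xs Hlev T HT.
  set (S := group_nz n g xbar) in *.
  set (e := fun j => xs j - xbar j) in *.
  set (a := norm2 m (fun i => matvec n A xs i - matvec n A xbar i)) in *.
  assert (Ha : 0 <= a) by apply sqrt_pos.
  assert (Hmv : matvec n A e = fun i => matvec n A xs i - matvec n A xbar i).
  { apply functional_extensionality; intros i. unfold matvec. rewrite <- rsum_minus.
    apply rsum_ext; intros; unfold e; ring. }
  rewrite !pq_pow in Hlev by lra. rewrite pq_pow by lra.
  assert (Pw : forall i, (i < r)%nat ->
     (if true then rpow (gnorm n g p xbar i) q else 0) <=
     (if true then rpow (gnorm n g p xs i) q else 0) + (if S i then rpow (gnorm n g p e i) q else 0)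
       - (if negb (S i) then rpow (gnorm n g p xs i) q else 0)).
  { intros i Hi. destruct (S i) eqn:Si; simpl.
    - assert (M : gnorm n g p xbar i <= gnorm n g p xs i + gnorm n g p e i).
      { change (Np n (fun j => Nat.eqb (g j) i) p xbar <= Np n (fun j => Nat.eqb (g j) i) p xs + Np n (fun j => Nat.eqb (g j) i) p e).
        apply minkowski; auto. intros j _ _. unfold e.
        pose proof (Rabs_triang (xs j) (- (xs j - xbar j))) as Ht. rewrite Rabs_Ropp in Ht.
        replace (xs j + - (xs j - xbar j)) with (xbar j) in Ht by ring. lra. }
      eapply Rle_trans. apply rpow_le; [lra| split; [apply gnorm_ge0|exact M]].
      pose proof (rpow_subadd (gnorm n g p xs i) (gnorm n g p e i) q (gnorm_ge0 _ _ _ _ _) (gnorm_ge0 _ _ _ _ _) ltac:(lra)).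
      lra.
    - rewrite gnorm_zero. rewrite rpow_0b; lra. apply nz_false; auto. }
  apply rsum_le in Pw. rewrite rsum_minus, rsum_plus in Pw.
  fold (Pq n r g p q (fun _ => true) xbar) (Pq n r g p q (fun _ => true) xs) (Pq n r g p q S e) in Pw.
  change (rsum r (fun i => if negb (S i) then rpow (gnorm n g p xs i) q else 0)) with (Pq n r g p q (fun i => negb (S i)) xs) in Pw.
  set (PScx := Pq n r g p q (fun i => negb (S i)) xs) in *.
  set (PSe := Pq n r g p q S e) in *.
  assert (Star : a ^ 2 + lambda * PScx <= lambda * PSe).
  { assert (lambda * Pq n r g p q (fun _ => true) xbar <= lambda * (Pq n r g p q (fun _ => true) xs + PSe - PScx))
      by (apply Rmult_le_compat_l; lra).
    unfold Pq in *. lra. }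
  assert (EScx : PScx = Pq n r g p q (fun i => negb (S i)) e).
  { unfold PScx, Pq. apply rsum_ext. intros i Hi. destruct (S i) eqn:Si; simpl; auto.
    f_equal. apply gnorm_ext. intros j Hj Hg. unfold e. rewrite (nz_false n g xbar i Si j Hj Hg). ring. }
  assert (Ha2 : 0 <= a ^ 2) by (apply pow2_ge_0).
  assert (Cone : pqnorm n r g p q (fun i => negb (S i)) e <= pqnorm n r g p q S e).
  { unfold pqnorm. apply rpow_le. left; apply Rdiv_lt_0_compat; lra. split. apply (Pq_ge0 n r g p q _ e).
    change (Pq n r g p q (fun i => negb (S i)) e <= PSe). rewrite <- EScx.
    apply (Rmult_le_reg_l lambda); auto. lra. }
  set (D := pqnorm n r g p 2 (fun i => T i || S i) e).
  assert (HD0 : 0 <= D) by apply rpow_ge0.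
  assert (Grec : phi * D <= a).
  { destruct (classic (exists j, (j < n)%nat /\ e j <> 0)) as [Ex|NEx].
    - destruct Hphi as [Hinf _].
      assert (Hy : grec_ratio m n r g A p q s s (norm2 m (matvec n A e) / D)).
      { exists e, S, T. split; [auto|split; [intros i Si; eapply nz_true; eauto|split; [lia|split; [exact Cone|split; [exact HT|reflexivity]]]]]. }
      specialize (Hinf _ Hy). rewrite Hmv in Hinf. fold a in Hinf.
      destruct HD0 as [HD|HD].
      + apply (Rmult_le_compat_r D) in Hinf; [|lra]. unfold Rdiv in Hinf.
        rewrite Rmult_assoc, Rinv_l, Rmult_1_r in Hinf; lra.
      + rewrite <- HD, Rmult_0_r; auto.
    - assert (D = 0).
      { unfold D, pqnorm. rewrite rsum_zero. apply rpow_0b. intros i Hi.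
        rewrite gnorm_zero. rewrite rpow_0b; destruct (T i || S i); auto.
        intros j Hj _. destruct (Req_dec (e j) 0); auto. exfalso; apply NEx; eauto. }
      rewrite H, Rmult_0_r; auto. }
  assert (HDa : D <= a / phi).
  { apply (Rmult_le_reg_l phi); auto. replace (phi * (a / phi)) with a by (field; lra). lra. }
  set (Z := Pq n r g p 2 S e).
  assert (HZ : Z <= D ^ 2).
  { unfold D. rewrite pq2_sq. unfold Z, Pq. apply rsum_le. intros i Hi.
    destruct (S i); destruct (T i); simpl; try lra; apply rpow_ge0. }
  assert (Hh : PSe <= rpow (INR s) (1 - q / 2) * rpow Z (q / 2)).
  { pose proof (holder r S (fun i => rpow (gnorm n g p e i) 2) (q/2)) as H.
    rewrite Hns in H. unfold PSe, Pq, Z.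
    replace (rsum r (fun i => if S i then rpow (gnorm n g p e i) q else 0)) with
      (rsum r (fun i => if S i then rpow (rpow (gnorm n g p e i) 2) (q / 2) else 0)).
    apply H; auto. intros; apply rpow_ge0. lra.
    apply rsum_ext; intros i Hi. destruct (S i); auto. rewrite rpow_mult by apply gnorm_ge0. f_equal; field. }
  assert (HZD : rpow Z (q / 2) <= rpow a q / rpow phi q).
  { eapply Rle_trans. apply rpow_le; [lra|split; [apply Pq_ge0|exact HZ]].
    rewrite <- rpow_2 by auto. rewrite rpow_mult by auto. replace (2 * (q / 2)) with q by field.
    rewrite <- rpow_div by lra. apply rpow_le; lra. }
  assert (HL : a ^ 2 + lambda * PScx <= lambda * rpow (INR s) (1 - q / 2) * rpow a q / rpow phi q).
  { eapply Rle_trans; [exact Star|]. unfold Rdiv. rewrite !Rmult_assoc. apply Rmult_le_compat_l; [lra|].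
    eapply Rle_trans; [exact Hh|]. apply Rmult_le_compat_l; [apply rpow_ge0|]. exact HZD. }
  assert (Hu : powerRZ 2 (- K) <= q / 2).
  { assert (E : powerRZ 2 (- K) * powerRZ 2 (K - 1) = / 2).
    { rewrite <- powerRZ_add by lra. replace (- K + (K - 1))%Z with (-1)%Z by lia. simpl. field. }
    pose proof (powerRZ_lt 2 (K - 1) ltac:(lra)). pose proof (powerRZ_lt 2 (- K) ltac:(lra)).
    nra. }
  assert (HD2 : D ^ 2 <= a ^ 2 / phi ^ 2).
  { replace (a ^ 2 / phi ^ 2) with ((a / phi) ^ 2) by (field; lra). apply pow_incr; auto. }
  assert (ES : pqnorm n r g p 2 (fun i => S i || T i) e = D).
  { unfold D; apply pq_ext; intros; apply Bool.orb_comm. }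
  rewrite ES.
  apply (final_alg lambda phi (INR s) q (powerRZ 2 (- K)) a (a ^ 2 + lambda * PScx) (D ^ 2)); auto.
  apply (le_INR 1); auto. assert (0 <= lambda * PScx) by (apply Rmult_le_pos; [lra|apply Pq_ge0]). lra.
Qed.

Theorem proposition2p2
  (m n r : nat) (g : nat -> nat) (A : nat -> nat -> R) (p q lambda : R)
  (xbar : nat -> R) (s : nat) (phi : R) (K : Z) :
  group_partition n r g ->
  0 < q -> q <= 1 -> 1 <= p -> p <= 2 ->
  (1 <= s)%nat ->
  ncount r (group_nz n g xbar) = s ->
  is_phi m n r g A p q s s phi -> 0 < phi ->
  powerRZ 2 (K - 1) * q >= 1 ->
  (forall k : Z, powerRZ 2 (k - 1) * q >= 1 -> (K <= k)%Z) ->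
  0 < lambda ->
  forall xs : nat -> R,
    (norm2 m (fun i => matvec n A xs i - matvec n A xbar i)) ^ 2
      + lambda * rpow (pqnorm n r g p q (fun _ => true) xs) q
      <= lambda * rpow (pqnorm n r g p q (fun _ => true) xbar) q ->
    (norm2 m (fun i => matvec n A xs i - matvec n A xbar i)) ^ 2
      + lambda * rpow (pqnorm n r g p q (fun i => negb (group_nz n g xbar i)) xs) q
      <= rpow lambda (2 / (2 - q))
         * rpow (INR s) ((1 - powerRZ 2 (- K)) * (2 / (2 - q)))
         / rpow phi (2 * q / (2 - q))
    /\
    (forall T : nat -> bool,
       is_top_set n r g p xs (group_nz n g xbar) s T ->
       (pqnorm n r g p 2 (fun i => orb (group_nz n g xbar i) (T i))
          (fun j => xs j - xbar j)) ^ 2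
       <= rpow lambda (2 / (2 - q))
          * rpow (INR s) ((1 - powerRZ 2 (- K)) * (2 / (2 - q)))
          / rpow phi (4 / (2 - q))).
Proof.
  intros Hpart Hq0 Hq1 Hp1 Hp2 Hs1 Hns Hphi Hphi0 HK _ Hl xs Hlev.
  split.
  - destruct (top_exists n r g p (fun j => xs j - xbar j) (group_nz n g xbar) s) as [T HT].
    apply (core m n r g A p q lambda xbar s phi K Hpart Hq0 Hq1 Hp1 Hp2 Hs1 Hns Hphi Hphi0 HK Hl xs Hlev T HT).
  - intros T [H1 [H2 H3]].
    apply (core m n r g A p q lambda xbar s phi K Hpart Hq0 Hq1 Hp1 Hp2 Hs1 Hns Hphi Hphi0 HK Hl xs Hlev T).
    split; [auto|split; [auto|]].
    intros i k Hi Hk Ti Jk Tk.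
    destruct (H1 i Ti) as [_ Ji].
    rewrite !(gnorm_ext n g p (fun j => xs j - xbar j) xs).
    + apply H3; auto.
    + intros j Hj Hg. rewrite (nz_false n g xbar i Ji j Hj Hg). ring.
    + intros j Hj Hg. rewrite (nz_false n g xbar k Jk j Hj Hg). ring.
Qed.
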